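(* For every natural number $n$ and every permutation $\sigma$, $$\sum_{\pi\in\mathcal{S}_n(\sigma)}t^{\mathrm{des}(\pi)}=\sum_{[y]\in[\mathrm{Cay}_n][\sigma^{-1}]}t^{\log_2|[y]|}.$$
   Context: $\mathrm{Cay}_n$ is the set of Cayley permutations of length $n$ (words of positive integers in which every integer from $1$ to the maximum occurs). Containment $y\le x$: indices $i_1<\dots<i_k$ ($k$ the length of $y$) with $x(i_s)<x(i_t)\iff y(s)<y(t)$ and $x(i_s)=x(i_t)\iff y(s)=y(t)$. $\mathcal{S}_n(\sigma)$ is the set of permutations of $[n]$ avoiding $\sigma$, and $\mathrm{des}(\pi)=|\{i:\pi(i)>\pi(i+1)\}|$. For $x\in\mathrm{Cay}_n$, $\gamma(x)$ is the permutation obtained by sorting the pairs $(x(i),i)$ increasingly by first coordinate, ties by decreasing second coordinate, and reading the second coordinates. $x\sim y$ iff $\gamma(x)=\gamma(y)$; $[y]$ is the class of $y$ (all its elements have the same length). For classes, $[x]\ge[y]$ iff $x'\ge y'$ for some $x'\in[x]$, $y'\in[y]$. $[\mathrm{Cay}_n][\sigma^{-1}]$ denotes the set of classes $[y]$ with $y\in\mathrm{Cay}_n$ and $[y]\not\ge[\sigma^{-1}]$. $t$ is an indeterminate. *)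

(* Defs.v *)
From HB Require Import structures.
From mathcomp Require Import all_boot all_order all_algebra all_fingroup.
Set Implicit Arguments. Unset Strict Implicit. Unset Printing Implicit Defensive.
Import GRing.Theory.

(* Words are represented as [seq nat]; positions/values are 1-based as in the paper. *)

Definition cayley (x : seq nat) : bool :=
  all (fun a => 0 < a) x && all (fun k => k \in x) (iota 1 (foldr maxn 0 x)).

Definition contains (x y : seq nat) : bool :=
  [exists m : (size x).-tuple bool,
    let s := mask m x in
    (size s == size y) &&
    [forall i : 'I_(size y), forall j : 'I_(size y),
       ((nth 0 s i < nth 0 s j) == (nth 0 y i < nth 0 y j)) &&
       ((nth 0 s i == nth 0 s j) == (nth 0 y i == nth 0 y j))]].

(* gamma x : sort the pairs (x(i), i) increasingly by first coordinate, ties by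
   decreasing second coordinate, read off second coordinates (1-based indices). *)
Definition gamma_ord (x : seq nat) (i j : nat) : bool :=
  (nth 0 x i.-1 < nth 0 x j.-1) || ((nth 0 x i.-1 == nth 0 x j.-1) && (j <= i)).
Definition gamma (x : seq nat) : seq nat :=
  sort (gamma_ord x) (iota 1 (size x)).

Definition des (s : seq nat) : nat :=
  count (fun i => nth 0 s i.+1 < nth 0 s i) (iota 0 (size s).-1).

Definition pword k (p : 'S_k) : seq nat := [seq (p i).+1 | i <- enum 'I_k].

(* Words of length n with entries in 0..n; every Cayley permutation of length n
   is (the value of) such a tuple. *)
Definition CT (n : nat) := (n.-tuple 'I_n.+1)%type.
Definition tw n m (x : n.-tuple 'I_m) : seq nat := map (@nat_of_ord m) x.

Definition cay_class n (y : CT n) : {set CT n} :=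
  [set x : CT n | cayley (tw x) && (gamma (tw x) == gamma (tw y))].

Definition cay_classes n : {set {set CT n}} :=
  [set cay_class y | y in [pred y : CT n | cayley (tw y)]].

(* [x] >= [z] for a class C = [x] of length n and a Cayley permutation z:
   some x' in C contains some Cayley permutation z' with gamma z' = gamma z. *)
Definition class_ge n (C : {set CT n}) (z : seq nat) : bool :=
  [exists x' in C, exists z' : (size z).-tuple 'I_(size z).+1,
     [&& cayley (tw z'), gamma (tw z') == gamma z & contains (tw x') (tw z')]].

(* Main.v *)
Require Import Defs.
From HB Require Import structures.
From mathcomp Require Import all_boot all_order all_algebra all_fingroup.
From mathcomp Require Import zify.
Import GRing.Theory.
Set Implicit Arguments. Unset Strict Implicit. Unset Printing Implicit Defensive.


Lemma mask_nth (m : bitseq) (x : seq nat) :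
  mask m x = map (nth 0 x) (mask m (iota 0 (size x))).
Proof.
by rewrite map_mask -/(mkseq (nth 0 x) (size x)) mkseq_nth.
Qed.

Lemma filter_iota_sorted (I : seq nat) m :
  sorted ltn I -> {in I, forall a, a < m} -> [seq a <- iota 0 m | a \in I] = I.
Proof.
move=> sI bI; apply: (sorted_eq ltn_trans).
- by move=> a b /andP[h1 h2]; lia.
- exact: (@sorted_filter _ ltn ltn_trans (fun a => a \in I) _ (iota_ltn_sorted 0 m)).
- exact: sI.
apply: uniq_perm.
- exact: filter_uniq (iota_uniq 0 m).
- exact: sorted_uniq ltn_trans (@ltnn) _ sI.
move=> a; rewrite mem_filter mem_iota /= add0n.
case aI: (a \in I) => //=.
by rewrite bI.
Qed.

Definition embeds (x y : seq nat) m k (f : 'I_k -> 'I_m) :=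
  (forall i j : 'I_k, i < j -> f i < f j) /\
  (forall i j : 'I_k,
     ((nth 0 x (f i) < nth 0 x (f j)) == (nth 0 y i < nth 0 y j)) &&
     ((nth 0 x (f i) == nth 0 x (f j)) == (nth 0 y i == nth 0 y j))).

Lemma containsE (x y : seq nat) m k : size x = m -> size y = k ->
  contains x y -> exists f : 'I_k -> 'I_m, embeds x y f.
Proof.
move=> sx sy; subst k; move=> /existsP[mt /andP[/eqP hs /forallP H]].
set I := mask mt (iota 0 (size x)).
have sE : mask mt x = map (nth 0 x) I by exact: mask_nth.
have sI : size I = size y by rewrite -hs sE size_map.
have fP : forall i : 'I_(size y), nth 0 I i < m.
  move=> i; have : nth 0 I i \in I by rewrite mem_nth // sI.
  by move/mem_mask; rewrite mem_iota sx add0n.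
exists (fun i => Ordinal (fP i)); split.
- move=> i j ij /=.
  have sortI : sorted ltn I.
    exact: (@subseq_sorted _ ltn ltn_trans _ _ (mask_subseq _ _) (iota_ltn_sorted 0 _)).
  by apply: (sorted_ltn_nth ltn_trans 0 sortI) => //; rewrite inE sI.
move=> i j /=; move/forallP: (H i) => /(_ j).
by rewrite sE !(nth_map 0) ?sI.
Qed.

Lemma containsI (x y : seq nat) m k (f : 'I_k -> 'I_m) : size x = m -> size y = k ->
  embeds x y f -> contains x y.
Proof.
move=> sx sy [finc H].
set I := map (fun i => val (f i)) (enum 'I_k).
have sortI : sorted ltn I.
  rewrite sorted_map.
  have : sorted (relpre val ltn) (enum 'I_k) by rewrite -sorted_map val_enum_ord iota_ltn_sorted.
  by apply: sub_sorted => a b /= /finc.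
have bI : {in I, forall a, a < m}.
  move=> a aI; case/mapP: aI => i _ ->; exact: ltn_ord.
set mt := [seq a \in I | a <- iota 0 m].
have smt : size mt == size x by rewrite size_map size_iota sx.
apply/existsP; exists (Tuple smt) => /=.
have sE : mask mt x = map (nth 0 x) I.
  by rewrite mask_nth sx /mt -filter_mask filter_iota_sorted.
have sI : size I = k by rewrite size_map size_enum_ord.
rewrite sE size_map sI sy eqxx /=.
apply/forallP => i; apply/forallP => j.
have nI : forall i : 'I_k, nth 0 I i = f i.
  by move=> l; rewrite (nth_map l) ?size_enum_ord // nth_ord_enum.
by rewrite !(nth_map 0) ?sI // !nI.
Qed.


Lemma gamma_ord_total x : total (gamma_ord x).
Proof.
move=> i j; rewrite /gamma_ord.
case: (ltngtP (nth 0 x i.-1) (nth 0 x j.-1)) => //= _.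
by case: (leqP j i) => //= /ltnW ->.
Qed.

Lemma gamma_ord_trans x : transitive (gamma_ord x).
Proof.
move=> j i l; rewrite /gamma_ord.
move=> /orP[h1|/andP[/eqP h1 h2]] /orP[h3|/andP[/eqP h3 h4]].
- by rewrite (ltn_trans h1 h3).
- by rewrite -h3 h1.
- by rewrite h1 h3.
- by rewrite h1 h3 eqxx (leq_trans h4 h2) orbT.
Qed.

Lemma gamma_ord_anti x : antisymmetric (gamma_ord x).
Proof.
move=> i j /andP[]; rewrite /gamma_ord.
move=> /orP[h1|/andP[/eqP h1 h2]] /orP[h3|/andP[/eqP h3 h4]].
- by move: (ltn_trans h1 h3); rewrite ltnn.
- by move: h1; rewrite h3 ltnn.
- by move: h3; rewrite h1 ltnn.
- by apply/eqP; rewrite eqn_leq h2 h4.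
Qed.

Lemma gamma_perm x : perm_eq (gamma x) (iota 1 (size x)).
Proof. by rewrite /gamma perm_sort. Qed.

Lemma gamma_sorted x : sorted (gamma_ord x) (gamma x).
Proof. exact: sort_sorted (gamma_ord_total x) _. Qed.

Lemma gamma_eq x w : perm_eq w (iota 1 (size x)) -> sorted (gamma_ord x) w ->
  gamma x = w.
Proof.
move=> pw sw; apply: (@sorted_eq nat (gamma_ord x) (@gamma_ord_trans x) (@gamma_ord_anti x)).
- exact: gamma_sorted.
- exact: sw.
by rewrite (permPl (gamma_perm x)) perm_sym.
Qed.

Lemma sorted_nthP (T : Type) (r : rel T) (x0 : T) (s : seq T) :
  sorted r s <-> (forall t, t.+1 < size s -> r (nth x0 s t) (nth x0 s t.+1)).
Proof.
case: s => [|a s] //=.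
split => [/(pathP x0) H t ht | H]; first exact: H.
by apply/(pathP x0) => t ht; apply: H.
Qed.

Lemma size_pword n (p : 'S_n) : size (pword p) = n.
Proof. by rewrite size_map size_enum_ord. Qed.

Lemma nth_pword n (p : 'S_n) (i : 'I_n) : nth 0 (pword p) i = (p i).+1.
Proof. by rewrite (nth_map i) ?size_enum_ord // nth_ord_enum. Qed.

Lemma nth_pword_nat n (p : 'S_n) s (h : s < n) :
  nth 0 (pword p) s = (p (Ordinal h)).+1.
Proof. by rewrite -nth_pword. Qed.

Lemma mem_pword n (p : 'S_n) v : (v \in pword p) = (0 < v <= n).
Proof.
apply/mapP/idP => [[i _ ->]|/andP[v0 vn]] /=; first exact: ltn_ord.
have h : v.-1 < n by lia.
exists ((p^-1)%g (Ordinal h)); first by rewrite mem_enum.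
by rewrite permKV /=; lia.
Qed.

Lemma uniq_pword n (p : 'S_n) : uniq (pword p).
Proof.
rewrite map_inj_uniq ?enum_uniq // => i j /eqP; rewrite eqSS => /eqP/val_inj.
exact: perm_inj.
Qed.

Lemma pword_perm n (p : 'S_n) : perm_eq (pword p) (iota 1 n).
Proof.
apply: uniq_perm; first exact: uniq_pword.
  exact: iota_uniq.
by move=> v; rewrite mem_pword mem_iota; lia.
Qed.

Lemma pword_inj n : injective (@pword n).
Proof.
move=> p q e; apply/permP => i; apply: val_inj.
by move: (nth_pword p i); rewrite e nth_pword => [[]].
Qed.

Lemma gamma_pwordV n (p : 'S_n) : gamma (pword (p^-1)%g) = pword p.
Proof.
apply: gamma_eq; first by rewrite size_pword pword_perm.
apply: (proj2 (@sorted_nthP nat _ 0 _)) => t; rewrite size_pword => ht.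
have ht' : t < n by lia.
rewrite (nth_pword_nat p ht') (nth_pword_nat p ht) /gamma_ord /=.
by rewrite !nth_pword !permK /= ltnSn.
Qed.

Lemma foldr_max_ub (w : seq nat) a : a \in w -> a <= foldr maxn 0 w.
Proof.
elim: w => //= b w IH; rewrite inE => /orP[/eqP->|/IH h]; first exact: leq_maxl.
exact: leq_trans h (leq_maxr _ _).
Qed.

Lemma foldr_max_le (w : seq nat) m : (forall a, a \in w -> a <= m) -> foldr maxn 0 w <= m.
Proof.
elim: w => //= b w IH H; rewrite geq_max H ?mem_head //=.
by apply: IH => a aw; apply: H; rewrite inE aw orbT.
Qed.

Lemma foldr_max_mem (w : seq nat) : w != [::] -> foldr maxn 0 w \in w.
Proof.
elim: w => //= b [|c w] IH _; first by rewrite maxn0 mem_head.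
have := IH isT; set M := foldr maxn 0 _ => hM.
case: (leqP M b) => h; first by rewrite mem_head.
by rewrite inE hM orbT.
Qed.

Lemma cayleyI (w : seq nat) m : (forall a, a \in w -> 0 < a <= m) ->
  (forall v, 0 < v <= m -> v \in w) -> cayley w.
Proof.
move=> H1 H2; apply/andP; split.
  by apply/allP => a /H1 /andP[].
apply/allP => v; rewrite mem_iota => /andP[v1 vM]; apply: H2.
rewrite v1 /=; have : foldr maxn 0 w <= m.
  by apply: foldr_max_le => a /H1 /andP[].
lia.
Qed.

Lemma cayley_pword n (p : 'S_n) : cayley (pword p).
Proof. by apply: (@cayleyI _ n) => [a|v]; rewrite mem_pword. Qed.


Definition mkt n m (w : seq nat) : n.-tuple 'I_m.+1 := [tuple inord (nth 0 w i) | i < n].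

Lemma size_tw n m (x : n.-tuple 'I_m) : size (tw x) = n.
Proof. by rewrite size_map size_tuple. Qed.

Lemma nth_tw n m (x : n.-tuple 'I_m) (i : 'I_n) : nth 0 (tw x) i = tnth x i.
Proof.
have hm : 0 < m by case: m x i => [|m] x i //; case: (tnth x i) => //.
by rewrite (nth_map (Ordinal hm)) ?size_tuple // -tnth_nth.
Qed.

Lemma tw_mkt n m w : size w = n -> (forall a, a \in w -> a <= m) -> tw (mkt n m w) = w.
Proof.
move=> sw bw; apply: (@eq_from_nth _ 0); first by rewrite size_tw.
move=> i; rewrite size_tw => hi.
rewrite (nth_tw _ (Ordinal hi)) tnth_mktuple /= inordK // ltnS bw //.
by rewrite mem_nth // sw.
Qed.

Definition ct n (p : 'S_n) : CT n := mkt n n (pword (p^-1)%g).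

Lemma tw_ct n (p : 'S_n) : tw (ct p) = pword (p^-1)%g.
Proof.
apply: tw_mkt; first exact: size_pword.
by move=> a; rewrite mem_pword => /andP[].
Qed.

Lemma incr_lt k m (f : 'I_k -> 'I_m) : (forall i j : 'I_k, i < j -> f i < f j) ->
  forall i j, (f i < f j) = (i < j).
Proof.
move=> H i j; case: (ltngtP i j) => h.
- exact: H.
- by apply/negbTE; rewrite -leqNgt; apply: ltnW; apply: H.
- by have e : i = j := val_inj h; subst j; rewrite ltnn.
Qed.

Lemma incr_eq k m (f : 'I_k -> 'I_m) : (forall i j : 'I_k, i < j -> f i < f j) ->
  forall i j, (f i == f j :> nat) = (i == j :> nat).
Proof.
move=> H i j; case: (ltngtP i j) => h.
- by rewrite ?(ltn_eqF h) (ltn_eqF (H _ _ h)).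
- by rewrite ?(gtn_eqF h) (gtn_eqF (H _ _ h)).
- by have e : i = j := val_inj h; subst j; rewrite !eqxx.
Qed.

Lemma rank_lt x n (p : 'S_n) (i j : 'I_n) : size x = n -> gamma x = pword p ->
  ((p^-1)%g i < (p^-1)%g j) = (i != j) && gamma_ord x i.+1 j.+1.
Proof.
move=> sx gx.
have sorted_w : sorted (gamma_ord x) (pword p) by rewrite -gx gamma_sorted.
have key : forall a b : 'I_n, (p^-1)%g a < (p^-1)%g b -> gamma_ord x a.+1 b.+1.
  move=> a b ab.
  have := sorted_ltn_nth (@gamma_ord_trans x) 0 sorted_w.
  move=> /(_ ((p^-1)%g a) ((p^-1)%g b)).
  by rewrite !inE size_pword !ltn_ord !nth_pword !permKV; apply.
case: (eqVneq i j) => [->|nij] /=; first by rewrite ltnn.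
case: (ltngtP ((p^-1)%g i) ((p^-1)%g j)) => [/key -> //| h | h].
- apply/esym/negbTE/negP => g1; have g2 := key _ _ h.
  have := @gamma_ord_anti x i.+1 j.+1; rewrite g1 g2 => /(_ isT) [] /val_inj e.
  by rewrite e eqxx in nij.
- by move/val_inj/perm_inj: h => e; rewrite e eqxx in nij.
Qed.

Lemma inv_contains n k (p : 'S_n) (s : 'S_k) :
  contains (pword p) (pword s) -> contains (pword (p^-1)%g) (pword (s^-1)%g).
Proof.
move/(containsE (size_pword p) (size_pword s)) => [f [finc H]].
have H' : forall i j, (p (f i) < p (f j)) = (s i < s j).
  by move=> i j; move/andP: (H i j) => [/eqP + _]; rewrite !nth_pword !ltnS.
pose g b := p (f ((s^-1)%g b)).
apply: (@containsI _ _ _ _ g (size_pword _) (size_pword _)); split.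
- by move=> i j ij; rewrite /g H' !permKV.
move=> i j; rewrite /g !nth_pword !permK !ltnS !eqSS.
by rewrite (incr_lt finc) (incr_eq finc) !eqxx.
Qed.

Lemma class_ge_iff n k (p : 'S_n) (s : 'S_k) :
  class_ge (cay_class (ct p)) (pword (s^-1)%g) = contains (pword p) (pword s).
Proof.
apply/idP/idP.
- move/existsP => [x' /andP[]].
  rewrite inE => /andP[_ /eqP gx] /existsP[z' /and3P[_ /eqP gz cz]].
  rewrite tw_ct gamma_pwordV in gx; rewrite gamma_pwordV in gz.
  have sz : size (tw z') = k by rewrite size_tw size_pword.
  move/(containsE (size_tw x') sz): cz => [f [finc H]].
  rewrite -(invgK p) -(invgK s); apply: inv_contains.
  apply: (@containsI _ _ _ _ f (size_pword _) (size_pword _)); split => // i j.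
  have finj : injective f.
    by move=> a b /(congr1 val)/eqP; rewrite (incr_eq finc) => /eqP/val_inj.
  rewrite !nth_pword !ltnS !eqSS !(inj_eq val_inj) !(inj_eq (@perm_inj _ _)) (inj_eq finj) eqxx andbT.
  rewrite (rank_lt _ _ (size_tw x') gx) (rank_lt _ _ sz gz).
  rewrite /gamma_ord /= -!(inj_eq val_inj) /= (incr_eq finc).
  move/andP: (H i j) => [/eqP -> /eqP ->].
  by rewrite !ltnS [f j <= f i]leqNgt (incr_lt finc) -leqNgt eqxx.
- move/inv_contains => c; apply/existsP; exists (ct p).
  rewrite inE eqxx andbT tw_ct cayley_pword /=.
  set z := pword (s^-1)%g.
  apply/existsP; exists (mkt (size z) (size z) z).
  have -> : tw (mkt (size z) (size z) z) = z.
    by apply: tw_mkt => // a; rewrite /z mem_pword size_pword => /andP[].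
  by rewrite cayley_pword eqxx c.
Qed.


Lemma card_count n (P : pred nat) : #|[set t : 'I_n | P t]| = count P (iota 0 n).
Proof. rewrite cardsE cardE -val_enum_ord count_map /enum_mem size_filter count_filter.
by apply: eq_count => x /=; rewrite andbT. Qed.

Definition pw n (p : 'S_n) s := (nth 0 (pword p) s).-1.
Definition Xv n (p : 'S_n) (x : CT n) s := nth 0 (tw x) (pw p s).

Lemma pwE n (p : 'S_n) (i : 'I_n) : pw p i = p i.
Proof. by rewrite /pw nth_pword. Qed.

Lemma pw_nat n (p : 'S_n) s (h : s < n) : pw p s = p (Ordinal h).
Proof. by rewrite -pwE. Qed.

Lemma nth_pw n (p : 'S_n) s : s < n -> nth 0 (pword p) s = (pw p s).+1.
Proof. by move=> h; rewrite (nth_pword_nat p h) (pw_nat p h). Qed.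

Lemma pw_inj n (p : 'S_n) s s' : s < n -> s' < n -> pw p s = pw p s' -> s = s'.
Proof.
move=> h h'; rewrite (pw_nat p h) (pw_nat p h') => /val_inj/perm_inj.
by move/(congr1 val).
Qed.

Lemma Xv_tw n (p : 'S_n) (x : CT n) (i : 'I_n) : nth 0 (tw x) i = Xv p x ((p^-1)%g i).
Proof. by rewrite /Xv pwE permKV. Qed.

Lemma Xv_mem n (p : 'S_n) (x : CT n) s : s < n -> Xv p x s \in tw x.
Proof. by move=> h; rewrite /Xv mem_nth // size_tw (pw_nat p h). Qed.

Lemma mem_Xv n (p : 'S_n) (x : CT n) a : a \in tw x -> exists2 s, s < n & Xv p x s = a.
Proof.
move=> /(nthP 0) [i]; rewrite size_tw => hi <-.
exists ((p^-1)%g (Ordinal hi)) => //; by rewrite -Xv_tw.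
Qed.

Definition gstep n (p : 'S_n) (x : CT n) s :=
  (Xv p x s < Xv p x s.+1) || (Xv p x s == Xv p x s.+1) && (pw p s.+1 <= pw p s).

Lemma gord_step n (p : 'S_n) (x : CT n) s : s.+1 < n ->
  gamma_ord (tw x) (nth 0 (pword p) s) (nth 0 (pword p) s.+1) = gstep p x s.
Proof.
move=> h; rewrite !nth_pw //; last by lia.
Qed.

Lemma gamma_cond n (p : 'S_n) (x : CT n) : gamma (tw x) = pword p ->
  forall s, s.+1 < n -> gstep p x s.
Proof.
move=> gx s h; rewrite -gord_step //.
have := gamma_sorted (tw x); rewrite gx => /(sorted_nthP _ 0) H.
by apply: H; rewrite size_pword.
Qed.

Lemma cond_gamma n (p : 'S_n) (x : CT n) : (forall s, s.+1 < n -> gstep p x s) ->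
  gamma (tw x) = pword p.
Proof.
move=> H; apply: gamma_eq; first by rewrite size_tw pword_perm.
apply/(sorted_nthP _ 0) => s; rewrite size_pword => h.
by rewrite gord_step // H.
Qed.

Lemma cayley_pos (w : seq nat) a : cayley w -> a \in w -> 0 < a.
Proof. by move=> /andP[/allP H _] /H. Qed.

Lemma cayley_mem (w : seq nat) v : cayley w -> 0 < v <= foldr maxn 0 w -> v \in w.
Proof.
move=> /andP[_ /allP H] hv; apply: H; rewrite mem_iota; lia.
Qed.

Definition inclass n (p : 'S_n) (x : CT n) := cayley (tw x) /\ gamma (tw x) = pword p.

Lemma inclassE n (p : 'S_n) (x : CT n) : x \in cay_class (ct p) <-> inclass p x.
Proof.
rewrite /cay_class inE tw_ct gamma_pwordV; split; first by move/andP=> [c /eqP g].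
by move=> [c g]; rewrite c g eqxx.
Qed.

Lemma cl_mono n (p : 'S_n) (x : CT n) : inclass p x ->
  forall s s', s <= s' -> s' < n -> Xv p x s <= Xv p x s'.
Proof.
move=> [_ gx] s s'; elim: s' => [|s' IH]; first by rewrite leqn0 => /eqP->.
rewrite leq_eqVlt => /orP[/eqP->//|hs] hn.
have := gamma_cond gx hn; rewrite /gstep => /orP[h|/andP[/eqP h _]].
  by apply: leq_trans (IH hs (ltnW hn)) (ltnW h).
by rewrite -h; apply: IH => //; apply: ltnW.
Qed.

Lemma cl_pos n (p : 'S_n) (x : CT n) : inclass p x -> forall s, s < n -> 0 < Xv p x s.
Proof. by move=> [cx _] s h; apply: cayley_pos cx (Xv_mem p x h). Qed.

Lemma cl_zero n (p : 'S_n) (x : CT n) : inclass p x -> 0 < n -> Xv p x 0 = 1.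
Proof.
move=> cl n0; have [cx _] := cl.
have p0 := cl_pos cl n0.
have : 1 \in tw x.
  apply: (@cayley_mem _ 1 cx); have := foldr_max_ub (Xv_mem p x n0); lia.
move/(mem_Xv p) => [s hs e].
have := cl_mono cl (leq0n s) hs; lia.
Qed.

Lemma cl_step n (p : 'S_n) (x : CT n) : inclass p x ->
  forall s, s.+1 < n -> Xv p x s <= Xv p x s.+1 <= (Xv p x s).+1.
Proof.
move=> cl s h; have [cx _] := cl.
have m1 := cl_mono cl (leqnSn s) h.
rewrite m1 /=; rewrite leqNgt; apply/negP => big.
have : (Xv p x s).+1 \in tw x.
  apply: (@cayley_mem _ _ cx); have := foldr_max_ub (Xv_mem p x h); lia.
move/(mem_Xv p) => [r hr e].
case: (leqP r s) => rs.
  have := cl_mono cl rs (ltnW h); lia.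
have := cl_mono cl rs hr; lia.
Qed.

Definition Eset n (p : 'S_n) (x : CT n) : {set 'I_n} :=
  [set t : 'I_n | (t.+1 < n) && (Xv p x t == Xv p x t.+1)].
Definition Dset n (p : 'S_n) : {set 'I_n} :=
  [set t : 'I_n | (t.+1 < n) && (pw p t.+1 < pw p t)].

Lemma cl_next n (p : 'S_n) (x : CT n) : inclass p x ->
  forall s, s.+1 < n -> Xv p x s.+1 = Xv p x s + ~~ (Xv p x s == Xv p x s.+1).
Proof.
move=> cl s h; have := cl_step cl h.
case: eqP => [<-|ne]; lia.
Qed.

Lemma Eset_inj n (p : 'S_n) : {in cay_class (ct p) &, injective (Eset p)}.
Proof.
move=> x y /inclassE cx /inclassE cy eE.
have key : forall s, s < n -> Xv p x s = Xv p y s.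
  elim=> [h|s IH h]; first by rewrite !cl_zero.
  have hs : s < n by lia.
  have : (Ordinal hs \in Eset p x) = (Ordinal hs \in Eset p y) by rewrite eE.
  rewrite !inE /= h /= => eb.
  by rewrite (cl_next cx h) (cl_next cy h) eb IH.
apply: eq_from_tnth => i; apply: val_inj.
change (nat_of_ord (tnth x i) = nat_of_ord (tnth y i)).
by rewrite -!nth_tw !(Xv_tw p) key.
Qed.

Lemma ivt (F : nat -> nat) : (forall s, F s.+1 <= (F s).+1) ->
  forall s0 v, F 0 <= v <= F s0 -> exists2 r, r <= s0 & F r = v.
Proof.
move=> H; elim=> [|s0 IH] v hv; first by exists 0 => //; lia.
case: (leqP v (F s0)) => h.
  by have [|r rs e] := IH v; [lia | exists r => //; lia].
exists s0.+1 => //; have := H s0; lia.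
Qed.

Lemma Eset_image n (p : 'S_n) : Eset p @: cay_class (ct p) = powerset (Dset p).
Proof.
apply/setP => S; rewrite powersetE; apply/imsetP/idP.
- move=> [x /inclassE cx ->]; apply/subsetP => t; rewrite !inE => /andP[h /eqP e].
  rewrite h /=; have := gamma_cond cx.2 h; rewrite /gstep e ltnn eqxx /= => le.
  rewrite ltn_neqAle le andbT; apply/eqP => e'.
  by move: (pw_inj h (ltn_ord t) e'); lia.
move=> SD.
pose Sn := [seq val t | t <- enum S].
have memS : forall t : 'I_n, (val t \in Sn) = (t \in S).
  by move=> t; rewrite mem_map ?mem_enum //; apply: val_inj.
pose Y s := (count (fun u => u \notin Sn) (iota 0 s)).+1.
have Ynext : forall s, Y s.+1 = Y s + (s \notin Sn).
  move=> s; rewrite /Y.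
  have -> : iota 0 s.+1 = iota 0 s ++ [:: s] by rewrite -addn1 iotaD.
  rewrite count_cat /= addn0; lia.
have Ybound : forall s, Y s <= s.+1.
  by move=> s; rewrite /Y ltnS; apply: leq_trans (count_size _ _) _; rewrite size_iota.
pose w := [seq Y ((p^-1)%g i) | i <- enum 'I_n].
have sw : size w = n by rewrite size_map size_enum_ord.
have tx : tw (mkt n n w) = w.
  apply: tw_mkt => // a /mapP[i _ ->]; have := Ybound ((p^-1)%g i); have := ltn_ord ((p^-1)%g i); lia.
set x := mkt n n w.
have XY : forall s, s < n -> Xv p x s = Y s.
  move=> s h; rewrite /Xv tx (pw_nat p h) (nth_map (p (Ordinal h))) ?size_enum_ord //.
  by rewrite nth_ord_enum permK.
have EE : Eset p x = S.
  apply/setP => t; rewrite inE.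
  case: (boolP (t.+1 < n)) => h /=.
    rewrite !XY // Ynext memS; case: (t \in S) => /=; lia.
  apply/esym/negP => tS; move/subsetP: SD => /(_ t tS); rewrite inE.
  by rewrite (negbTE h).
exists x; last by rewrite EE.
apply/inclassE; split.
- case: (posnP n) => [n0|npos].
    by rewrite tx; move: sw; rewrite n0 => /size0nil ->.
  rewrite tx; apply: (@cayleyI _ (Y n.-1)) => [a /mapP[i _ ->]|v hv].
  + have hi := ltn_ord ((p^-1)%g i).
    have mono : forall a b, a <= b -> Y a <= Y b.
      move=> a' b'; elim: b' => [|b' IH]; first by rewrite leqn0 => /eqP->.
      rewrite leq_eqVlt => /orP[/eqP->//|]; rewrite ltnS => /IH; rewrite Ynext; lia.
    have := mono ((p^-1)%g i) n.-1 (ltac:(lia)); rewrite /Y; lia.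
  + have Ystep : forall s, Y s.+1 <= (Y s).+1 by move=> s; rewrite Ynext; lia.
    have Y0 : Y 0 = 1 by [].
    have hv' : Y 0 <= v <= Y n.-1 by rewrite Y0.
    have [r rn e] := @ivt Y Ystep n.-1 v hv'.
    have hr : r < n by lia.
    apply/mapP; exists (p (Ordinal hr)); first by rewrite mem_enum.
    by rewrite permK e.
- apply: cond_gamma => s h; rewrite /gstep !XY //; last by lia.
  rewrite Ynext; case: (boolP (s \in Sn)) => hS /=; last by rewrite addn1 ltnSn.
  have hs : s < n by lia.
  rewrite (_ : s = Ordinal hs) // memS in hS.
  move/subsetP: SD => /(_ _ hS); rewrite inE /= => /andP[_ lt].
  by rewrite addn0 ltnn eqxx /= ltnW.
Qed.

Lemma card_class n (p : 'S_n) : #|cay_class (ct p)| = 2 ^ des (pword p).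
Proof.
rewrite -(card_in_imset (@Eset_inj _ p)) Eset_image card_powerset; congr (2 ^ _).
rewrite /Dset (@card_count n (fun t => (t.+1 < n) && (pw p t.+1 < pw p t))) /des size_pword.
case: n p => [|m] p; first by [].
have -> : iota 0 m.+1 = iota 0 m ++ [:: m] by rewrite -addn1 iotaD.
rewrite count_cat /= ltnn /= !addn0.
apply: eq_in_count => t; rewrite mem_iota add0n => /= ht.
have h1 : t.+1 < m.+1 by lia.
rewrite h1 /= !nth_pw //; lia.
Qed.


Lemma word_perm n (w : seq nat) : perm_eq w (iota 1 n) -> exists p : 'S_n, w = pword p.
Proof.
move=> pw.
have sw : size w = n by rewrite (perm_size pw) size_iota.
have uw : uniq w by rewrite (perm_uniq pw) iota_uniq.
have mw : forall a, a \in w -> 0 < a <= n.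
  by move=> a; rewrite (perm_mem pw) mem_iota; lia.
have nb : forall i : 'I_n, 0 < nth 0 w i <= n.
  by move=> i; apply: mw; rewrite mem_nth // sw.
pose f (i : 'I_n) : 'I_n := insubd i (nth 0 w i).-1.
have fv : forall i, val (f i) = (nth 0 w i).-1.
  by move=> i; rewrite val_insubd; have := nb i; case: ifP => //; lia.
have finj : injective f.
  move=> i j /(congr1 val); rewrite !fv => e.
  have e' : nth 0 w i = nth 0 w j by have := nb i; have := nb j; lia.
  have hi : (i : nat) < size w by rewrite sw.
  have hj : (j : nat) < size w by rewrite sw.
  apply: val_inj; move/eqP: e'; rewrite (nth_uniq 0 hi hj uw); exact/eqP.
exists (perm finj); apply: (@eq_from_nth _ 0); first by rewrite size_pword.
move=> i; rewrite sw => hi; rewrite (nth_pword_nat _ hi) permE fv.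
have := nb (Ordinal hi); simpl; lia.
Qed.

Lemma classes_eq n :
  cay_classes n = [set cay_class (ct p) | p in [set: 'S_n]].
Proof.
apply/setP => C; apply/imsetP/imsetP.
- move=> [y]; rewrite inE => cy ->.
  have gpe : perm_eq (gamma (tw y)) (iota 1 n).
    by have := gamma_perm (tw y); rewrite size_tw.
  have [p gp] := word_perm gpe.
  exists p; first by rewrite inE.
  apply/setP => x; rewrite /cay_class !inE tw_ct gamma_pwordV gp //.
- move=> [p _ ->]; exists (ct p) => //.
  by rewrite inE tw_ct cayley_pword.
Qed.

Lemma phi_inj n : {in [set: 'S_n] &, injective (fun p => cay_class (ct p))}.
Proof.
move=> p q _ _ e.
have : ct p \in cay_class (ct p) by apply/inclassE; split; rewrite tw_ct ?cayley_pword ?gamma_pwordV.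
rewrite e => /inclassE [_]; rewrite tw_ct gamma_pwordV; exact: pword_inj.
Qed.

Unset Implicit Arguments.
Local Open Scope ring_scope.

Theorem corollary4p12 (n k : nat) (sigma : 'S_k) :
  \sum_(pi : 'S_n | ~~ contains (pword pi) (pword sigma))
      ('X^(des (pword pi)) : {poly int})
  = \sum_(C in cay_classes n | ~~ class_ge C (pword (sigma^-1)%g))
      'X^(trunc_log 2 #|C|).
Proof.
rewrite big_mkcondr classes_eq big_imset; last exact: phi_inj.
rewrite big_mkcond /=.
apply: eq_big => [p|p _]; first by rewrite inE.
by rewrite class_ge_iff card_class trunc_expnK.
Qed.
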